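(* Let $\alpha>0$, $\sigma>0$, and let $\mathcal S$, $\mathcal T_\alpha$, $\mathcal F_\alpha$, $E_h$ be the linear operators on the polynomial space $\mathbb C[z]$ described in the context. Then, as linear operators on $\mathbb C[z]$, $$\mathcal S=E_{\sigma/\alpha}\,\mathcal T_\alpha,\qquad \mathcal S^{-1}=\mathcal F_\alpha\,E_{-\sigma/\alpha}.$$
   Context: Let $\pi_{\alpha,\sigma}=\exp(-\sigma/\alpha^2)\sum_{n\ge0}\frac{1}{n!}(\sigma/\alpha^2)^n\delta_{\alpha n}$ on $\alpha\mathbb N_0$, and let $(c_n)_{n\ge0}$ be the monic polynomials orthogonal with respect to $\pi_{\alpha,\sigma}$, with generating function $\sum_{n\ge0}\frac{t^n}{n!}c_n(z)=\exp\big(\frac z\alpha\log(1+t\alpha)-\frac{\sigma t}{\alpha}\big)$. Let $\mathcal S$ denote the linear bijection of $\mathbb C[z]$ defined by $\mathcal Sc_n(z)=z^n$ for $n\in\mathbb N_0$ (this is the restriction to polynomials of the generalized Segal--Bargmann transform, the unitary $L^2(\alpha\mathbb N_0,\pi_{\alpha,\sigma})\to\mathbb F_\sigma(\mathbb C)$ with $c_n\mapsto z^n$). For $h\in\mathbb C$, $E_h$ is the shift $(E_hp)(z)=p(z+h)$. Let $S(n,k)$ and $s(n,k)$ be the Stirling numbers of the second and first kind, so $z^n=\sum_{k=1}^nS(n,k)(z)_k$ and $(z)_n=\sum_{k=1}^ns(n,k)z^k$ with $(z)_n=z(z-1)\cdots(z-n+1)$. Define $T_{\alpha,0}=1$, $T_{\alpha,n}(z)=\sum_{k=1}^nS(n,k)\alpha^{n-k}z^k$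 ($n\ge1$), and let $\mathcal T_\alpha$ be the linear operator on $\mathbb C[z]$ with $\mathcal T_\alpha z^n=T_{\alpha,n}(z)$. Define $(z\mid\alpha)_0=1$, $(z\mid\alpha)_n=z(z-\alpha)\cdots(z-(n-1)\alpha)$, and let $\mathcal F_\alpha$ be the linear operator on $\mathbb C[z]$ with $\mathcal F_\alpha z^n=(z\mid\alpha)_n$. *)

(* Defs.v *)
From HB Require Import structures.
From mathcomp Require Import all_boot all_order all_algebra.
Set Implicit Arguments. Unset Strict Implicit. Unset Printing Implicit Defensive.
Import Order.TTheory GRing.Theory Num.Theory.
Local Open Scope ring_scope.

(* The coefficient field C: any numeric algebraically closed field
   (the complex numbers are an instance). *)
Section Defs.
Variable C : numClosedFieldType.

(* ---------- formal power series in t with coefficients in C[z] ---------- *)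
Definition pseries := nat -> {poly C}.

Definition ps_one : pseries := fun n => (n == 0%N)%:R.
Definition ps_mul (f g : pseries) : pseries :=
  fun n => \sum_(i < n.+1) f i * g (n - i)%N.
Definition ps_pow (f : pseries) (m : nat) : pseries := iter m (ps_mul f) ps_one.

(* exp(f) for a series f with zero constant term:
   [t^n] exp f = sum_{m <= n} [t^n] f^m / m!  (higher m contribute 0). *)
Definition ps_exp (f : pseries) : pseries :=
  fun n => \sum_(m < n.+1) ((m`!)%:R)^-1 *: ps_pow f m n.

(* log(1 + t a) = sum_{k>=1} (-1)^(k+1) a^k t^k / k *)
Definition ps_log1p (a : C) : pseries :=
  fun n => if n == 0%N then 0 else ((-1) ^+ n.+1 * a ^+ n / n%:R)%:P.

(* the exponent  (z/alpha) log(1 + t alpha) - sigma t / alpha *)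
Definition charlier_exponent (alpha sigma : C) : pseries :=
  fun n => (alpha^-1 *: 'X) * ps_log1p alpha n
           - (if n == 1%N then (sigma / alpha)%:P else 0).

Definition charlier (alpha sigma : C) (n : nat) : {poly C} :=
  (n`!)%:R *: ps_exp (charlier_exponent alpha sigma) n.

Fixpoint stirling2 (n k : nat) : nat :=
  match n, k with
  | 0, 0 => 1
  | 0, _.+1 => 0
  | _.+1, 0 => 0
  | n'.+1, k'.+1 => (k'.+1 * stirling2 n' k'.+1 + stirling2 n' k')%N
  end.

Definition Tpoly (alpha : C) (n : nat) : {poly C} :=
  if n == 0%N then 1
  else \sum_(1 <= k < n.+1) ((stirling2 n k)%:R * alpha ^+ (n - k)) *: 'X^k.

Definition gen_falling (alpha : C) (n : nat) : {poly C} :=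
  \prod_(i < n) ('X - (i%:R * alpha)%:P).

Definition lin_ext (b : nat -> {poly C}) (p : {poly C}) : {poly C} :=
  \sum_(n < size p) p`_n *: b n.

Definition opT (alpha : C) := lin_ext (Tpoly alpha).
Definition opF (alpha : C) := lin_ext (gen_falling alpha).

Definition shift (h : C) (p : {poly C}) : {poly C} := p \Po ('X + h%:P).

End Defs.

(* Main.v *)
Require Import Defs.
From HB Require Import structures.
From mathcomp Require Import all_boot all_order all_algebra.
From mathcomp Require Import zify ring.
Import Order.TTheory GRing.Theory Num.Theory.
Local Open Scope ring_scope.

Set Implicit Arguments. Unset Strict Implicit.

Section Lin.
Variable C : numClosedFieldType.
Implicit Types (b : nat -> {poly C}) (p q : {poly C}).

Lemma lin_extE b p N : (size p <= N)%N ->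
  lin_ext b p = \sum_(k < N) p`_k *: b k.
Proof.
move=> hN; rewrite /lin_ext (big_ord_widen N (fun k => p`_k *: b k) hN).
rewrite big_mkcond /=; apply: eq_bigr => i _; case: ifP => // /negbT.
by rewrite -leqNgt => hi; rewrite nth_default ?scale0r.
Qed.

Lemma lin_ext_is_linear b : linear (lin_ext b).
Proof.
move=> a p q; set N := maxn (size p) (size q).
have hp : (size p <= N)%N by rewrite leq_maxl.
have hq : (size q <= N)%N by rewrite leq_maxr.
have hpq : (size (a *: p + q)%R <= N)%N.
  by rewrite (leq_trans (size_polyD _ _)) // geq_max (leq_trans (size_scale_leq _ _)).
rewrite (lin_extE _ hpq) (lin_extE _ hp) (lin_extE _ hq).
rewrite scaler_sumr -big_split /=; apply: eq_bigr => i _.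
by rewrite coefD coefZ scalerDl scalerA.
Qed.

HB.instance Definition _ b := GRing.isLinear.Build C {poly C} {poly C} _ (lin_ext b) (lin_ext_is_linear b).

Lemma lin_extXn b n : lin_ext b 'X^n = b n.
Proof.
rewrite (lin_extE _ (leqnn _)) size_polyXn big_ord_recr /= big1 ?add0r.
  by rewrite coefXn eqxx scale1r.
by move=> i _; rewrite coefXn (ltn_eqF (ltn_ord i)) scale0r.
Qed.

Lemma lin_ext_sum b N (c : nat -> C) :
  lin_ext b (\sum_(k < N) c k *: 'X^k) = \sum_(k < N) c k *: b k.
Proof. rewrite linear_sum; apply: eq_bigr => i _; by rewrite linearZ /= lin_extXn. Qed.

End Lin.

Unset Implicit Arguments. Set Strict Implicit.

Set Implicit Arguments. Unset Strict Implicit.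

Section Stir.
Variable C : numClosedFieldType.
Variable alpha : C.
Local Notation g := (gen_falling alpha).

Lemma stirling2_gt n k : (n < k)%N -> stirling2 n k = 0%N.
Proof.
elim: n k => [|n IH] [|k] //= h.
by rewrite !IH // ?muln0 // ltnW.
Qed.

Lemma stirling2_n0 n : stirling2 n.+1 0 = 0%N. Proof. by []. Qed.

Lemma gS k : g k.+1 = g k * ('X - (k%:R * alpha)%:P).
Proof. by rewrite /gen_falling big_ord_recr. Qed.

Lemma Xg k : 'X * g k = g k.+1 + (k%:R * alpha) *: g k.
Proof. by rewrite gS mulrBr -mul_polyC [g k * _%:P]mulrC subrK mulrC. Qed.

Lemma Tpoly_sum n : Tpoly alpha n =
  \sum_(k < n.+1) ((stirling2 n k)%:R * alpha ^+ (n - k)) *: 'X^k.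
Proof.
rewrite /Tpoly; case: n => [|n] /=.
  by rewrite big_ord1 /= mul1r scale1r expr0.
rewrite [RHS]big_ord_recl /= mul0r scale0r add0r.
rewrite big_add1 /= big_mkord; apply: eq_bigr => i _; done.
Qed.

Lemma stir_sum n M : (n < M)%N ->
  \sum_(k < M) ((stirling2 n k)%:R * alpha ^+ (n - k)) *: g k = 'X^n.
Proof.
elim: n M => [|n IH] M hM.
  case: M hM => // M _; rewrite big_ord_recl /= big1 ?addr0.
    by rewrite mul1r scale1r /gen_falling big_ord0.
  by move=> i _; rewrite mul0r scale0r.
case: M hM => // M hM.
rewrite exprS -(IH M hM) mulr_sumr.
have E : forall i : (ordinal M), ('X : {poly C}) * (((stirling2 n i)%:R * alpha ^+ (n - i)) *: g i) = ((stirling2 n i)%:R * alpha ^+ (n - i)) *: ('X * g i).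
 by move=> i; rewrite scalerAr.
rewrite (eq_bigr _ (fun i _ => E i)) {E}.
under eq_bigr => i _ do rewrite Xg scalerDr scalerA.
rewrite big_split /= big_ord_recl /= mul0r scale0r add0r.
under eq_bigr => i _ do rewrite subSS natrD mulrDl scalerDl.
rewrite big_split /= addrC; congr (_ + _).
case: M hM => // M hM.
rewrite [RHS]big_ord_recl [LHS]big_ord_recr /=.
rewrite mul0r mulr0 scale0r add0r.
rewrite add0n (stirling2_gt (n:=n) (k:=M.+1)) // muln0 mul0r scale0r addr0.
apply: eq_bigr => i _; rewrite /bump /= !add1n add0n.
have [hi|hi] := leqP i.+1 n.
  rewrite -[in LHS](subnSK hi) exprS natrM.
  congr (_ *: _); rewrite mulrS; ring.
by rewrite stirling2_gt // !muln0 !mul0r.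
Qed.

Lemma opF_Tpoly n : opF alpha (Tpoly alpha n) = 'X^n.
Proof. by rewrite /opF Tpoly_sum (lin_ext_sum _ _ (fun k => (stirling2 n k)%:R * alpha ^+ (n - k))) stir_sum. Qed.

Lemma opF_opT p : opF alpha (opT alpha p) = p.
Proof.
have -> : opT alpha p = \sum_(i < size p) p`_i *: Tpoly alpha i by [].
rewrite /opF linear_sum /= -[RHS]coefK poly_def.
apply: eq_bigr => i _; rewrite linearZ /=; congr (_ *: _); exact: opF_Tpoly.
Qed.

End Stir.

Unset Implicit Arguments. Set Strict Implicit.

Set Implicit Arguments. Unset Strict Implicit.

Section Ser.
Variable C : numClosedFieldType.
Local Notation PS := {poly {poly C}}.

Lemma mul_low (A B : PS) m : (forall j, (j < m)%N -> B`_j = 0) ->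
  forall j, (j < m)%N -> (A * B)`_j = 0.
Proof.
move=> hB j hj; rewrite coefM big1 // => i _; rewrite hB ?mulr0 //.
have := ltn_ord i; lia.
Qed.

Lemma trunc_mul (L A B : PS) K : (forall i, (i < K)%N -> A`_i = B`_i) ->
  forall j, (j < K)%N -> (L * A)`_j = (L * B)`_j.
Proof.
move=> hAB j hj; rewrite !coefM; apply: eq_bigr => i _; rewrite hAB //.
have := ltn_ord i; lia.
Qed.

Lemma pow_low (Q : PS) : Q`_0 = 0 -> forall m j, (j < m)%N -> (Q ^+ m)`_j = 0.
Proof.
move=> hQ; elim=> [|m IH] j hj //; rewrite exprS coefM big1 // => i _.
case: (nat_of_ord i) (ltn_ord i) => [|i'] hi; first by rewrite hQ mul0r.
rewrite IH ?mulr0 //; lia.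
Qed.

Variables (alpha sigma : C).
Hypothesis alpha0 : alpha != 0.
Local Notation f := (charlier_exponent alpha sigma).
Local Notation lam := (sigma / alpha).

Definition PP (N : nat) : PS := \poly_(i < N) f i.

Lemma f0 : f 0 = 0.
Proof. by rewrite /charlier_exponent /ps_log1p /= mulr0 subr0. Qed.

Lemma PP0 N : (PP N)`_0 = 0.
Proof. by rewrite coef_poly; case: N => //= N; rewrite f0. Qed.

Lemma ps_pow_coef N m n : (n < N)%N -> ps_pow f m n = ((PP N) ^+ m)`_n.
Proof.
elim: m n => [|m IH] n hn; first by rewrite expr0 coef1.
rewrite exprS coefM /=; apply: eq_bigr => i _.
rewrite -IH; last by have := ltn_ord i; lia.
rewrite coef_poly ifT //; have := ltn_ord i; lia.
Qed.

Definition cm (m : nat) : C := ((m`!)%:R)^-1.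
Definition EE (N : nat) : PS := \sum_(m < N) (cm m)%:P *: (PP N) ^+ m.

Lemma ps_exp_coef N n : (n < N)%N -> ps_exp f n = (EE N)`_n.
Proof.
move=> hn; rewrite /ps_exp /EE coef_sum.
rewrite (big_ord_widen N (fun m => cm m *: ps_pow f m n) hn) big_mkcond /=.
apply: eq_bigr => i _; rewrite coefZ mul_polyC -(ps_pow_coef i hn).
case: ifP => // /negbT; rewrite -leqNgt => hi.
by rewrite (ps_pow_coef i hn) (pow_low (PP0 N)) ?scaler0.
Qed.


Lemma cmS i : cm i.+1 *+ i.+1 = cm i.
Proof.
have h1 : (i.+1)%:R != 0 :> C by rewrite pnatr_eq0.
have h2 : (i`!)%:R != 0 :> C by rewrite pnatr_eq0 -lt0n fact_gt0.
rewrite /cm factS natrM -mulr_natr; field; rewrite h2 /=; by rewrite -natr1 addrC in h1.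
Qed.

Lemma EE_deriv K : (EE K.+1)^`() =
  (PP K.+1)^`() * EE K.+1 - (cm K)%:P *: ((PP K.+1)^`() * (PP K.+1) ^+ K).
Proof.
rewrite /EE raddf_sum /= big_ord_recl /= derivZ expr0 derivC scaler0 add0r.
rewrite mulr_sumr big_ord_recr /= -scalerAr addrK; apply: eq_bigr => i _.
rewrite derivZ deriv_exp /= add0n -scalerMnr scalerMnl -polyCMn cmS.
by rewrite scalerAr.
Qed.


Lemma fS j : f j.+1 *+ j.+1 = (-alpha) ^+ j *: 'X - (if j == 0%N then lam%:P else 0).
Proof.
have E : forall c : C, ((alpha^-1 *: 'X) * c%:P) *+ j.+1 = (c * alpha^-1 *+ j.+1) *: ('X : {poly C}).
  by move=> c; rewrite mulrC mul_polyC scalerA scalerMnl.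
rewrite /charlier_exponent /ps_log1p /= mulrnBl E.
have hj : (j.+1)%:R != 0 :> C by rewrite pnatr_eq0.
congr (_ *: _ - _).
  have hj2 : 1 + j%:R != 0 :> C by rewrite addrC natr1 pnatr_eq0.
  rewrite -mulr_natr [RHS]exprNn !exprS; field; by rewrite alpha0 hj2.
by case: j {E hj} => [|j] /=; rewrite ?mul0rn.
Qed.

Definition LL : PS := 1 + alpha%:P *: 'X.
Definition RR : PS := ('X - lam%:P)%:P - (lam * alpha)%:P *: 'X.

Lemma LP_coef K j : (j < K)%N -> (LL * (PP K.+1)^`())`_j = RR`_j.
Proof.
move=> hj; rewrite /LL /RR mulrDl mul1r -scalerAl coefD coefZ coefXM.
rewrite coefB coefZ coefX coefC !coef_deriv !coef_poly.
case: j hj => [|k] hk /=.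
  by rewrite ifT // !mulr0 addr0 subr0 (fS 0) /= expr0 scale1r.
rewrite !ifT; try lia.
rewrite !fS; case: k hk => [|k] hk /=.
  rewrite expr1 mulr1 subr0 -!mul_polyC; rewrite polyCN polyCM; ring.
rewrite !subr0 mulr0 subr0 -!mul_polyC exprS polyCM polyC_exp polyCN; ring.
Qed.


Lemma main_coef K j : (j < K)%N -> (LL * (EE K.+1)^`())`_j = (RR * EE K.+1)`_j.
Proof.
move=> hj.
have hD : forall i, (i < K)%N -> ((EE K.+1)^`())`_i = ((PP K.+1)^`() * EE K.+1)`_i.
  move=> i hi; rewrite EE_deriv coefB coefZ (mul_low (B:=PP K.+1 ^+ K) _ _ hi) ?mulr0 ?subr0 //.
  by move=> i' hi'; apply: pow_low (PP0 _) _ _ hi'.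
rewrite (trunc_mul _ hD hj) mulrA mulrC (trunc_mul _ (fun i hi => LP_coef (K:=K) hi) hj).
by rewrite mulrC.
Qed.

Lemma LDE K j : (j.+1 < K)%N -> (LL * (EE K.+1)^`())`_j.+1 =
  ps_exp f j.+2 *+ j.+2 + alpha%:P * (ps_exp f j.+1 *+ j.+1).
Proof.
move=> hj; rewrite /LL mulrDl mul1r -scalerAl coefD coefZ coefXM /= !coef_deriv.
by rewrite !(ps_exp_coef (N:=K.+1)) //; lia.
Qed.

Lemma RE K j : (j.+1 < K)%N -> (RR * EE K.+1)`_j.+1 =
  ('X - lam%:P) * ps_exp f j.+1 - (lam * alpha)%:P * ps_exp f j.
Proof.
move=> hj; rewrite /RR mulrBl -scalerAl coefB coefCM coefZ coefXM /=.
by rewrite !(ps_exp_coef (N:=K.+1)) //; lia.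
Qed.

Lemma e_rec k : ps_exp f k.+2 *+ k.+2 + alpha%:P * (ps_exp f k.+1 *+ k.+1) =
  ('X - lam%:P) * ps_exp f k.+1 - (lam * alpha)%:P * ps_exp f k.
Proof. by rewrite -(LDE (K:=k.+2)) // main_coef // RE. Qed.

Lemma e0 : ps_exp f 0 = 1.
Proof. by rewrite /ps_exp big_ord1 /cm /= /ps_one /= invr1 scale1r. Qed.

Lemma e1 : ps_exp f 1 = 'X - lam%:P.
Proof.
have := main_coef (K:=1) (j:=0) erefl.
rewrite /LL /RR mulrDl mul1r -scalerAl coefD coefZ coefXM /= coef_deriv mulr0 addr0.
rewrite mulrBl -scalerAl coefB coefCM coefZ coefXM /= mulr0 subr0.
by rewrite -!(ps_exp_coef (N:=2)) // e0 mulr1.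
Qed.


Local Notation ch := (charlier alpha sigma).

Lemma ch0 : ch 0 = 1.
Proof. by rewrite /charlier e0 scale1r. Qed.

Lemma ch1 : ch 1 = 'X - lam%:P.
Proof. by rewrite /charlier e1 scale1r. Qed.

Lemma ch_rec k : ch k.+2 =
  ('X - (lam + k.+1%:R * alpha)%:P) * ch k.+1 - (k.+1%:R * lam * alpha)%:P * ch k.
Proof.
have ha : ps_exp f k.+2 *+ k.+2 = ('X - lam%:P) * ps_exp f k.+1
   - (lam * alpha)%:P * ps_exp f k - alpha%:P * (ps_exp f k.+1 *+ k.+1).
  by rewrite -e_rec addrK.
rewrite /charlier factS natrM -scalerA scaler_nat scalerMnr ha (factS k) natrM.
move: (ps_exp f k) (ps_exp f k.+1) => c b.
rewrite -scaler_nat.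
move: (k.+1%:R : C) (k`!%:R : C) => kk F.
rewrite -!mul_polyC !(polyCM, polyCD, polyCB).
ring.
Qed.


End Ser.

Unset Implicit Arguments. Set Strict Implicit.

Set Implicit Arguments. Unset Strict Implicit.

Section D.
Variable C : numClosedFieldType.
Variables (alpha lam : C).
Local Notation g := (gen_falling alpha).
Local Notation F := (opF alpha).

Lemma X_derivXn i : ('X : {poly C}) * ('X^i)^`() = 'X^i *+ i.
Proof. by case: i => [|i]; rewrite derivXn ?mulr0n ?mulr0 // mulrnAr -exprS. Qed.

Lemma F_Xn i : F 'X^i = g i.
Proof. exact: lin_extXn. Qed.

Lemma F_Xmul_gen (Fl : {linear {poly C} -> {poly C}}) (hF : forall i, Fl 'X^i = g i) p :
  Fl ('X * p) = 'X * Fl p - alpha%:P * Fl ('X * p^`()).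
Proof.
rewrite -[p]coefK poly_def (raddf_sum deriv) /= !mulr_sumr !linear_sum.
rewrite !mulr_sumr -sumrB; apply: eq_bigr => i _.
move: (p`_i) (nat_of_ord i) => c {}i.
rewrite derivZ -!scalerAr !linearZ /= X_derivXn raddfMn /= -exprS !hF -scalerAr Xg.
by rewrite -!mul_polyC polyCM -mulr_natr; ring.
Qed.

Lemma F_Xmul p : F ('X * p) = 'X * F p - alpha%:P * F ('X * p^`()).
Proof. exact: (F_Xmul_gen (Fl := lin_ext g) (@lin_extXn C g)). Qed.

Definition dd n := F (('X - lam%:P) ^+ n).

Lemma dd0 : dd 0 = 1.
Proof. by rewrite /dd expr0 -(expr0 'X) F_Xn /gen_falling big_ord0. Qed.

Lemma dd1 : dd 1 = 'X - lam%:P.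
Proof.
rewrite /dd; have -> : (('X - lam%:P) ^+ 1 : {poly C}) = 'X^1 - lam *: 'X^0 by rewrite expr1 expr0 -alg_polyC.
rewrite /opF linearB linearZ /= !lin_extXn /gen_falling big_ord1 big_ord0 /=.
by rewrite mul0r subr0 alg_polyC.
Qed.


Lemma dd_rec k : dd k.+2 =
  ('X - (lam + k.+1%:R * alpha)%:P) * dd k.+1 - (k.+1%:R * lam * alpha)%:P * dd k.
Proof.
set q : {poly C} := 'X - lam%:P.
have e1 : q ^+ k.+2 = 'X * q ^+ k.+1 - lam *: q ^+ k.+1.
  by rewrite -mul_polyC -mulrBl exprS.
have e2 : 'X * (q ^+ k.+1)^`() = (q ^+ k.+1 + lam *: q ^+ k) *+ k.+1.
  rewrite deriv_exp derivXsubC mul1r /= mulrnAr exprS -mul_polyC; congr (_ *+ _).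
  by rewrite /q; ring.
rewrite /dd -/q e1 /opF linearB linearZ /= -/(opF alpha) F_Xmul e2.
rewrite /opF raddfMn raddfD /= linearZ /=.
move: (lin_ext g (q ^+ k.+1)) (lin_ext g (q ^+ k)) => a b.
rewrite -!mul_polyC -mulr_natr !(polyCD, polyCM) polyC1 polyC_natr -mulr_natr.
ring.
Qed.

End D.

Unset Implicit Arguments. Set Strict Implicit.

Section Sh.
Variable C : numClosedFieldType.
Lemma shift_is_linear (h : C) : linear (shift h).
Proof. by move=> a p q; rewrite /shift comp_polyD comp_polyZ. Qed.
HB.instance Definition _ h := GRing.isLinear.Build C {poly C} {poly C} _ (shift h) (shift_is_linear h).
End Sh.

Lemma lin3 (C : numClosedFieldType) (S G1 G2 : {linear {poly C} -> {poly C}})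
  (h : forall n, S (G1 (G2 'X^n)) = 'X^n) p : S (G1 (G2 p)) = p.
Proof.
rewrite -[p]coefK poly_def linear_sum linear_sum linear_sum; apply: eq_bigr => i _.
by rewrite !linearZ /= h.
Qed.

Theorem proposition4p4 (C : numClosedFieldType) (alpha sigma : C)
  (halpha : 0 < alpha) (hsigma : 0 < sigma)
  (S : {linear {poly C} -> {poly C}})
  (hS : forall n : nat, S (charlier alpha sigma n) = 'X^n) :
  (forall p : {poly C}, S p = shift (sigma / alpha) (opT alpha p)) /\
  (forall p : {poly C},
     S (opF alpha (shift (- (sigma / alpha)) p)) = p /\
     opF alpha (shift (- (sigma / alpha)) (S p)) = p).
Proof.
have a0 : alpha != 0 by rewrite gt_eqF.

have chd : forall n, charlier alpha sigma n = dd alpha (sigma / alpha) n.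
  suff H : forall n, charlier alpha sigma n = dd alpha (sigma / alpha) n /\
                     charlier alpha sigma n.+1 = dd alpha (sigma / alpha) n.+1.
    by move=> n; case: (H n).
  elim => [|n [IH1 IH2]].
    split; first by rewrite ch0 dd0.
    by rewrite ch1 //; symmetry; apply: dd1.
  by split => //; rewrite ch_rec // dd_rec IH1 IH2.
have GX : forall n, lin_ext (gen_falling alpha) (shift (- (sigma / alpha)) 'X^n) = charlier alpha sigma n.
  by move=> n; rewrite chd /dd /shift comp_Xn_poly polyCN.
have SG : forall p, S (opF alpha (shift (- (sigma / alpha)) p)) = p.
  move=> p; apply: (@lin3 _ S (lin_ext (gen_falling alpha)) (shift (- (sigma / alpha)))).
  by move=> n; rewrite /= GX hS.
have GH : forall p, opF alpha (shift (- (sigma / alpha)) (shift (sigma / alpha) (opT alpha p))) = p.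
  by move=> p; rewrite /shift polyCN comp_polyXaddC_K opF_opT.
have P1 : forall p, S p = shift (sigma / alpha) (opT alpha p).
  by move=> p; rewrite -{1}(GH p) SG.
split => // p; split => //.
by rewrite P1 GH.
Qed.
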